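(* The set $\mathcal{A}_N^C$ is star-shaped with respect to the flat matrix $T_*=\frac1N\sum_{k=0}^{N-1}X^k$: for every $T\in\mathcal{A}_N^C$ and every $m\in(0,1]$, $mT+(1-m)T_*\in\mathcal{A}_N^C$.
   Context: $X$ is the $N\times N$ cyclic shift $X|j\rangle=|j\oplus1\rangle$ (addition mod $N$), $\mathcal{K}_k=X^k-\mathbb{I}_N$, and $\mathcal{A}_N^C$ is the set of matrices $\exp(\sum_{k=1}^{N-1}t_k\mathcal{K}_k)$ with all $t_k\ge0$. *)

(* Defs.v *)
From HB Require Import structures.
From mathcomp Require Import all_boot all_order all_algebra.
From mathcomp Require Import all_classical all_reals all_analysis.
Unset Printing Implicit Defensive.
Import Order.TTheory GRing.Theory Num.Theory.
Import numFieldNormedType.Exports.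
Local Open Scope ring_scope.

Definition shiftX (R : pzRingType) (N : nat) : 'M[R]_N :=
  \matrix_(i < N, j < N) ((nat_of_ord i == (nat_of_ord j).+1 %% N)%N)%:R.

Definition expm (R : realType) (N : nat) (A : 'M[R]_N) : 'M[R]_N :=
  \matrix_(i < N, j < N)
    limn (fun n : nat => ((\sum_(k < n) ((k`!%:R)^-1 *: A ^+ k)) i j : R)).

Definition Kgen (R : realType) (N k : nat) : 'M[R]_N := (shiftX R N) ^+ k - 1%:M.

Definition circAC (R : realType) (N : nat) : set 'M[R]_N :=
  [set T | exists t : nat -> R,
      (forall k : nat, (1 <= k < N)%N -> 0 <= t k) /\
      T = expm R N (\sum_(1 <= k < N) t k *: Kgen R N k)].

Definition Tflat (R : realType) (N : nat) : 'M[R]_N :=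
  (N%:R)^-1 *: \sum_(k < N) (shiftX R N) ^+ k.

(* Main.v *)
Require Import Defs.
From HB Require Import structures.
From mathcomp Require Import all_boot all_order all_algebra.
From mathcomp Require Import all_classical all_reals all_analysis.
From mathcomp Require Import zify ring.
Import Order.TTheory GRing.Theory Num.Theory.
Import numFieldNormedType.Exports.
Local Open Scope classical_set_scope.
Local Open Scope ring_scope.

Section Cauchy.
Variable R : realType.

Definition psum (a : nat -> R) (m : nat) : R := \sum_(i < m) a i.

Lemma psum_series (a : nat -> R) : psum a = series a.
Proof. by apply/funext => m; rewrite /psum /series /= big_mkord. Qed.

Definition csum (a b : nat -> R) (m : nat) : R :=
  \sum_(i < m) \sum_(j < m) (if (i + j < m)%N then a i * b j else 0).

Lemma psum_widen (a : nat -> R) {n m} : (n <= m)%N ->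
  psum a n = \sum_(i < m) (if (i < n)%N then a i else 0).
Proof.
move=> nm; rewrite /psum -big_mkcond /=.
by rewrite (big_ord_widen_cond m (fun i => true) a nm).
Qed.

Lemma psumM (a b : nat -> R) {n m} : (n <= m)%N ->
  psum a n * psum b n = \sum_(i < m) \sum_(j < m)
     (if (i < n)%N && (j < n)%N then a i * b j else 0).
Proof.
move=> nm; rewrite !(psum_widen _ nm) mulr_suml; apply: eq_bigr => i _.
rewrite mulr_sumr; apply: eq_bigr => j _.
by case: (i < n)%N; case: (j < n)%N; rewrite ?mulr0 ?mul0r.
Qed.

Lemma csum_bound (a b : nat -> R) m :
  `|csum a b m - psum a (m %/ 2) * psum b (m %/ 2)| <=
  psum (fun i => `|a i|) m * psum (fun j => `|b j|) m -
  psum (fun i => `|a i|) (m %/ 2) * psum (fun j => `|b j|) (m %/ 2).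
Proof.
have hm : (m %/ 2 <= m)%N by apply: leq_div.
rewrite !(psumM _ _ hm) (psumM _ _ (leqnn m)) /csum.
rewrite -sumrB; apply: le_trans (ler_norm_sum _ _ _) _.
rewrite -sumrB. apply: ler_sum. move=> i _.
rewrite -sumrB; apply: le_trans (ler_norm_sum _ _ _) _.
rewrite -sumrB; apply: ler_sum => j _.
have ltim := ltn_ord i; have ltjm := ltn_ord j.
rewrite ltim ltjm /=.
case: (ltnP i (m %/ 2)) => hi; case: (ltnP j (m %/ 2)) => hj /=.
- have -> : (i + j < m)%N.
    by move: hi hj; clear; lia.
  by rewrite subrr normr0 subrr.
all: rewrite !subr0; case: (i + j < m)%N; rewrite ?normrM // normr0 mulr_ge0 //.
Qed.


Lemma cauchy_cvg (a b : nat -> R) (la lb Sa Sb : R) :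
  psum (fun i => `|a i|) n @[n --> \oo] --> Sa ->
  psum (fun i => `|b i|) n @[n --> \oo] --> Sb ->
  psum a n @[n --> \oo] --> la ->
  psum b n @[n --> \oo] --> lb ->
  csum a b n @[n --> \oo] --> la * lb.
Proof.
move=> HSa HSb Ha Hb.
have Hh : (m %/ 2)%N @[m --> \oo] --> \oo := cvg_divnr 2 isT.
have Ha2 : psum a (m %/ 2) @[m --> \oo] --> la := cvg_comp _ _ Hh Ha.
have Hb2 : psum b (m %/ 2) @[m --> \oo] --> lb := cvg_comp _ _ Hh Hb.
have HSa2 : psum (fun i => `|a i|) (m %/ 2) @[m --> \oo] --> Sa := cvg_comp _ _ Hh HSa.
have HSb2 : psum (fun i => `|b i|) (m %/ 2) @[m --> \oo] --> Sb := cvg_comp _ _ Hh HSb.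
pose P m := psum a (m %/ 2) * psum b (m %/ 2).
pose e m := psum (fun i => `|a i|) m * psum (fun i => `|b i|) m -
  psum (fun i => `|a i|) (m %/ 2) * psum (fun i => `|b i|) (m %/ 2).
have HP : P m @[m --> \oo] --> la * lb by apply: cvgM.
have He : e m @[m --> \oo] --> 0.
  rewrite -(subrr (Sa * Sb)); apply: cvgB; apply: cvgM => //.
have Hlo : (P m - e m) @[m --> \oo] --> la * lb.
  by rewrite -[X in _ --> X]subr0; apply: cvgB.
have Hhi : (P m + e m) @[m --> \oo] --> la * lb.
  by rewrite -[X in _ --> X]addr0; apply: cvgD.
apply: (squeeze_cvgr _ Hlo Hhi).
near=> m.
have := csum_bound a b m.
by rewrite ler_distl.
Unshelve. all: by end_near.
Qed.

End Cauchy.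
Arguments psum {R}.
Arguments csum {R}.

Lemma tri_diag (V : nmodType) (F : nat -> nat -> V) m :
  \sum_(i < m.+1) \sum_(j < m.+1) (if (i + j == m)%N then F i j else 0)
  = \sum_(j < m.+1) F (m - j)%N j.
Proof.
rewrite exchange_big /=; apply: eq_bigr => j _.
have hj := ltn_ord j.
rewrite (eq_bigr (fun i : 'I_m.+1 => if (i == (m - j)%N :> nat) then F (m - j)%N j else 0)); last first.
  move=> i _; have -> : (i + j == m)%N = (i == (m - j)%N :> nat) by move: hj; clear; lia.
  by case: eqP => // ->.
rewrite -big_mkcond /= (big_ord1_eq _ (fun i => F (m - j)%N j)) /=.
by rewrite ifT //; lia.
Qed.

Lemma tri (V : nmodType) (F : nat -> nat -> V) m :
  \sum_(k < m) \sum_(i < k.+1) F (k - i)%N i =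
  \sum_(i < m) \sum_(j < m) (if (i + j < m)%N then F i j else 0).
Proof.
elim: m => [|m IH]; first by rewrite !big_ord0.
rewrite big_ord_recr /= IH.
rewrite [RHS](eq_bigr (fun i : 'I_m.+1 => \sum_(j < m.+1) (if (i + j < m)%N then F i j else 0)
   + \sum_(j < m.+1) (if (i + j == m)%N then F i j else 0))); last first.
  move=> i _; rewrite -big_split /=; apply: eq_bigr => j _.
  rewrite ltnS leq_eqVlt.
  case E1: (i + j < m)%N; case E2: (i + j == m)%N => /=; rewrite ?addr0 ?add0r ?orbT //.
  by move: E1 E2; clear; lia.
rewrite big_split /= tri_diag; congr (_ + _).
rewrite big_ord_recr /= [X in _ + X]big1 ?addr0; last first.
  by move=> j _; rewrite ifF //; apply/negbTE; rewrite -leqNgt leq_addr.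
apply: eq_bigr => i _; rewrite big_ord_recr /= ifF ?addr0 //.
by apply/negbTE; rewrite -leqNgt leq_addl.
Qed.

Section Mexp.
Variables (R : realType) (n : nat).
Implicit Types (A B : 'M[R]_n).

Definition ecoef A (p q : 'I_n) (k : nat) : R := ((k`!%:R)^-1 *: A ^+ k) p q.

Lemma expm_entry A p q : expm R n A p q = limn (psum (ecoef A p q)).
Proof.
rewrite mxE; congr (limn _); apply/funext => m.
by rewrite summxE /psum.
Qed.

Definition mnorm A : R := \sum_p \sum_q `|A p q|.

Lemma row_le A p : \sum_r `|A p r| <= mnorm A.
Proof.
rewrite /mnorm [X in _ <= X](bigD1 p) //= lerDl; apply: sumr_ge0 => i _.
by apply: sumr_ge0.
Qed.

Lemma mnorm_ge0 A : 0 <= mnorm A.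
Proof. by apply: sumr_ge0 => i _; apply: sumr_ge0. Qed.

Lemma pow_bound A k p q : `|(A ^+ k) p q| <= mnorm A ^+ k.
Proof.
elim: k p q => [|k IH] p q.
  rewrite expr0 -idmxE mxE; case: (p == q) => /=; by rewrite ?normr1 ?normr0.
rewrite exprS -mulmxE mxE.
apply: le_trans (ler_norm_sum _ _ _) _.
apply: (@le_trans _ _ (\sum_r `|A p r| * mnorm A ^+ k)).
  apply: ler_sum => r _; rewrite normrM ler_wpM2l //.
rewrite -mulr_suml exprS ler_wpM2r ?exprn_ge0 ?mnorm_ge0 //.
exact: row_le.
Qed.

Lemma ecoef_abs_cvg A p q : cvgn (psum (fun k => `|ecoef A p q k|)).
Proof.
rewrite psum_series.
apply: (@series_le_cvg _ _ (exp_coeff (mnorm A))) => //.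
- move=> k; rewrite exp_coeffE /=; apply: mulr_ge0; last by rewrite exprn_ge0 ?mnorm_ge0.
  by rewrite invr_ge0.
- move=> k; rewrite exp_coeffE /= /ecoef mxE normrM.
  rewrite ger0_norm ?invr_ge0 // ler_wpM2l ?invr_ge0 //.
  exact: pow_bound.
- exact: is_cvg_series_exp_coeff.
Qed.

Lemma ecoef_cvg A p q : cvgn (psum (ecoef A p q)).
Proof.
rewrite psum_series; apply: normed_cvg.
have := ecoef_abs_cvg A p q; rewrite psum_series; exact.
Qed.


Lemma cvg_sumr_seq (I : Type) (r : seq I) (u : I -> nat -> R) (l : I -> R) :
  (forall i, u i m @[m --> \oo] --> l i) ->
  \sum_(i <- r) u i m @[m --> \oo] --> \sum_(i <- r) l i.
Proof.
move=> H; elim: r => [|i r IHr].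
  rewrite big_nil; under eq_cvg do rewrite big_nil; exact: cvg_cst.
rewrite big_cons; under eq_cvg do rewrite big_cons.
by apply: cvgD.
Qed.

Lemma fact_neq0 k : (k`!%:R : R) != 0.
Proof. by rewrite pnatr_eq0 -lt0n fact_gt0. Qed.

Lemma coef_split A B k (i : 'I_k.+1) :
  (k`!%:R : R)^-1 *: (A ^+ (k - i) * B ^+ i *+ 'C(k, i)) =
  (((k - i)`!%:R : R)^-1 *: A ^+ (k - i)) * ((i`!%:R : R)^-1 *: B ^+ i).
Proof.
have -> : forall M : 'M[R]_n, M *+ 'C(k, i) = ('C(k, i)%:R : R) *: M.
  by move=> M; rewrite scaler_nat.
rewrite scalerA -!mulmxE -scalemxAl -scalemxAr scalerA; congr (_ *: _).
have hik : (i <= k)%N by rewrite -ltnS.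
have := bin_fact hik => /(congr1 (fun x => x%:R : R)); rewrite !natrM => hf.
rewrite -hf.
have h1 := fact_neq0 i; have h2 := fact_neq0 (k - i).
have h3 : ('C(k, i)%:R : R) != 0 by rewrite pnatr_eq0 -lt0n bin_gt0.
rewrite !invfM. field.
by rewrite h1 h2 h3.
Qed.

Lemma expS_mul A B m : A * B = B * A ->
  \sum_(k < m) ((k`!%:R : R)^-1 *: (A + B) ^+ k) =
  \sum_(i < m) \sum_(j < m) (if (i + j < m)%N then
     ((i`!%:R : R)^-1 *: A ^+ i) * ((j`!%:R : R)^-1 *: B ^+ j) else 0).
Proof.
move=> hAB.
rewrite -(tri _ (fun i j => ((i`!%:R : R)^-1 *: A ^+ i) * ((j`!%:R : R)^-1 *: B ^+ j))).
apply: eq_bigr => k _.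
rewrite exprDn_comm // scaler_sumr; apply: eq_bigr => i _.
exact: coef_split.
Qed.

Lemma expmD A B : A *m B = B *m A ->
  expm R n (A + B) = expm R n A *m expm R n B.
Proof.
move=> hAB; have hAB' : A * B = B * A by rewrite -!mulmxE.
apply/matrixP => p q.
rewrite expm_entry [RHS]mxE.
under eq_bigr do rewrite !expm_entry.
apply: cvg_lim => //.
have -> : psum (ecoef (A + B) p q) =
    fun m => \sum_r csum (ecoef A p r) (ecoef B r q) m.
  apply/funext => m.
  rewrite /psum /ecoef -summxE expS_mul // summxE /csum.
  rewrite exchange_big /=; apply: eq_bigr => i _.
  rewrite summxE exchange_big /=; apply: eq_bigr => j _.
  case: ifP => _; last by rewrite mxE big1.
  by rewrite -mulmxE mxE.
apply: cvg_sumr_seq => r.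
apply: cauchy_cvg.
- exact: ecoef_abs_cvg.
- exact: ecoef_abs_cvg.
- exact: ecoef_cvg.
- exact: ecoef_cvg.
Qed.

End Mexp.
Arguments ecoef {R n}.

Section Idem.
Variables (R : realType) (n : nat).
Implicit Types (A B P L : 'M[R]_n).

Lemma expR_psum (c : R) : expR c = limn (psum (exp_coeff c)).
Proof. by rewrite expRE /pseries psum_series exp_coeffE. Qed.

Lemma powZ_idem P (c : R) k : P *m P = P -> (c *: P) ^+ k.+1 = c ^+ k.+1 *: P.
Proof.
move=> hP; elim: k => [|k IH]; first by rewrite !expr1.
rewrite exprS IH -mulmxE -scalemxAl -scalemxAr hP scalerA -exprS.
by [].
Qed.

Lemma psum_idem P (c : R) p q m : P *m P = P ->
  psum (ecoef (c *: P) p q) m.+1 =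
  (1%:M : 'M[R]_n) p q + (psum (exp_coeff c) m.+1 - 1) * P p q.
Proof.
move=> hP; elim: m => [|m IH].
  rewrite /psum !big_ord1 /ecoef /exp_coeff /= expr0 -idmxE fact0 invr1 scale1r.
  by rewrite expr0 mulr1 subrr mul0r addr0.
rewrite /psum big_ord_recr /= -/(psum _ m.+1) IH.
rewrite big_ord_recr /= -/(psum _ m.+1).
rewrite /ecoef powZ_idem // !mxE /exp_coeff /=.
ring.
Qed.

Lemma expm_idem P (c : R) : P *m P = P ->
  expm R n (c *: P) = 1%:M + (expR c - 1) *: P.
Proof.
move=> hP; apply/matrixP => p q.
rewrite expm_entry [RHS]mxE [X in _ = _ + X]mxE.
apply: cvg_lim => //.
rewrite -cvg_shiftS /=.
have -> : (fun k => psum (ecoef (c *: P) p q) k.+1) =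
   (fun k => (1%:M : 'M[R]_n) p q + (psum (exp_coeff c) k.+1 - 1) * P p q).
  by apply/funext => k; rewrite psum_idem.
apply: cvgD; first exact: cvg_cst.
apply: cvgM; last exact: cvg_cst.
apply: cvgB; last exact: cvg_cst.
rewrite expR_psum.
have h : psum (exp_coeff c) k @[k --> \oo] --> limn (psum (exp_coeff c)).
  rewrite psum_series; exact: is_cvg_series_exp_coeff.
by rewrite -cvg_shiftS in h.
Qed.

Lemma expm_mulP L P : L *m P = 0 -> expm R n L *m P = P.
Proof.
move=> hLP; apply/matrixP => p q.
rewrite mxE; under eq_bigr do rewrite expm_entry.
have H : (\sum_r psum (ecoef L p r) k * P r q) @[k --> \oo] -->
   \sum_r limn (psum (ecoef L p r)) * P r q.
  apply: cvg_sumr_seq => r; apply: cvgM; last exact: cvg_cst.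
  exact: ecoef_cvg.
rewrite -(cvg_lim (@Rhausdorff R) H).
apply: cvg_lim => //.
rewrite -cvg_shiftS /=.
have -> : (fun k => \sum_r psum (ecoef L p r) k.+1 * P r q) = (fun _ => P p q).
  apply/funext => k.
  have -> : \sum_r psum (ecoef L p r) k.+1 * P r q =
     ((\sum_(i < k.+1) ((i`!%:R : R)^-1 *: L ^+ i)) *m P) p q.
    rewrite mxE; apply: eq_bigr => r _; by rewrite summxE.
  rewrite mulmx_suml big_ord_recl /= big1 ?addr0.
    by rewrite expr0 fact0 invr1 scale1r mulmxE mul1r.
  move=> i _; rewrite /bump /= add1n exprSr -scalemxAl -mulmxE -mulmxA hLP.
  by rewrite mulmx0 scaler0.
exact: cvg_cst.
Qed.

End Idem.

Section Circ.
Variables (R : realType) (N : nat).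
Local Notation X := (shiftX R N).
Local Notation S := (\sum_(k < N) X ^+ k).

Lemma Xpow_entry k (i j : 'I_N) : (X ^+ k) i j = ((nat_of_ord i == (j + k) %% N)%N)%:R.
Proof.
have hN : (0 < N)%N by apply: leq_ltn_trans (leq0n _) (ltn_ord i).
elim: k i j => [|k IH] i j.
  by rewrite expr0 -idmxE mxE addn0 modn_small.
rewrite exprSr -mulmxE mxE.
pose r0 : 'I_N := Ordinal (ltn_pmod j.+1 hN).
rewrite (bigD1 r0) //= big1 ?addr0.
  rewrite IH mxE /= eqxx mulr1; congr ((_ : bool)%:R); congr (_ == _).
  by rewrite modnDml addSnnS.
move=> r hr; rewrite mxE.
suff -> : (r == (j.+1 %% N)%N :> nat) = false by rewrite mulr0.
by apply/negbTE; apply: contra hr => /eqP h; apply/eqP/val_inj.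
Qed.

Lemma XN : X ^+ N = 1.
Proof.
apply/matrixP => i j; rewrite Xpow_entry -idmxE mxE modnDr modn_small //.
Qed.

Lemma XS : X * S = S.
Proof.
rewrite mulr_sumr.
under eq_bigr do rewrite -exprS.
have := XN; case: N => [|N'] XN'; first by rewrite !big_ord0.
rewrite big_ord_recr /= XN' [RHS]big_ord_recl /= expr0 addrC; congr (_ + _).
Qed.

Lemma commXS : GRing.comm X S.
Proof. by apply: commr_sum => i _; apply: commrX. Qed.

Lemma SX : S * X = S.
Proof. by rewrite -commXS XS. Qed.

Lemma XkS k : X ^+ k * S = S.
Proof. by elim: k => [|k IH]; rewrite ?expr0 ?mul1r // exprSr -mulrA XS IH. Qed.

Lemma SXk k : S * X ^+ k = S.
Proof. by elim: k => [|k IH]; rewrite ?expr0 ?mulr1 // exprS mulrA SX IH. Qed.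

Lemma SS : S * S = S *+ N.
Proof.
rewrite mulr_suml (eq_bigr (fun _ => S)); last by move=> i _; exact: XkS.
by rewrite sumr_const card_ord.
Qed.

Local Notation P := (Tflat R N).

Lemma natN_neq0 : (0 < N)%N -> (N%:R : R) != 0.
Proof. by move=> hN; rewrite pnatr_eq0 -lt0n. Qed.

Lemma PP : (0 < N)%N -> P *m P = P.
Proof.
move=> hN; rewrite /Tflat -scalemxAl -scalemxAr scalerA mulmxE SS.
have -> : S *+ N = (N%:R : R) *: S by rewrite scaler_nat.
rewrite scalerA; congr (_ *: _).
have h := natN_neq0 hN. field. exact: h.
Qed.

Lemma XkP k : X ^+ k *m P = P.
Proof. by rewrite /Tflat -scalemxAr mulmxE XkS. Qed.

Lemma PXk k : P *m X ^+ k = P.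
Proof. by rewrite /Tflat -scalemxAl mulmxE SXk. Qed.

Lemma KP k : Kgen R N k *m P = 0.
Proof. by rewrite /Kgen mulmxBl XkP mul1mx subrr. Qed.

Lemma PK k : P *m Kgen R N k = 0.
Proof. by rewrite /Kgen mulmxBr PXk mulmx1 subrr. Qed.

Lemma sumK : (0 < N)%N ->
  \sum_(1 <= k < N) Kgen R N k = (N%:R : R) *: P - (N%:R : R) *: 1%:M.
Proof.
move=> hN.
have h0 : \sum_(0 <= k < N) Kgen R N k = \sum_(1 <= k < N) Kgen R N k.
  by rewrite big_ltn // /Kgen expr0 -idmxE subrr add0r.
rewrite -h0 big_mkord /Kgen sumrB sumr_const card_ord.
rewrite /Tflat scalerA mulfV ?natN_neq0 // scale1r.
by rewrite scaler_nat.
Qed.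

Lemma LP (t : nat -> R) :
  (\sum_(1 <= k < N) t k *: Kgen R N k) *m P = 0.
Proof.
rewrite mulmx_suml big1 // => k _.
by rewrite -scalemxAl KP scaler0.
Qed.

Lemma PL (t : nat -> R) :
  P *m (\sum_(1 <= k < N) t k *: Kgen R N k) = 0.
Proof.
rewrite mulmx_sumr big1 // => k _.
by rewrite -scalemxAr PK scaler0.
Qed.

End Circ.

Local Close Scope classical_set_scope.

Theorem corollary3 (R : realType) (N : nat) (T : 'M[R]_N) (m : R) :
  circAC R N T -> 0 < m -> m <= 1 ->
  circAC R N (m *: T + (1 - m) *: Tflat R N).
Proof.
move=> [t [ht ->]] m0 m1.
case: (posnP N) => [N0|hN].
  subst N; exists t; split => //; by apply/matrixP => -[].
set L := \sum_(1 <= k < N) t k *: Kgen R N k.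
set P := Tflat R N.
pose a := - ln m. pose c := a / (N%:R : R).
have ha : 0 <= a by rewrite oppr_ge0 ln_le0.
have hLP : L *m P = 0 := LP _ _ t.
have hPL : P *m L = 0 := PL _ _ t.
have hPP : P *m P = P := PP _ _ hN.
exists (fun k => t k + c); split.
  move=> k hk; apply: addr_ge0; first exact: ht.
  by apply: divr_ge0 => //; apply: ler0n.
have Hsum : \sum_(1 <= k < N) (t k + c) *: Kgen R N k =
    L + (a *: P + (- a) *: 1%:M).
  rewrite (eq_bigr (fun k => t k *: Kgen R N k + c *: Kgen R N k)); last first.
    by move=> k _; rewrite scalerDl.
  rewrite big_split /= -scaler_sumr sumK // scalerBr !scalerA.
  have -> : c * N%:R = a by rewrite /c divfK //; exact: natN_neq0.
  by rewrite /L ?scaleNr.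
rewrite Hsum; clearbody P L.
have cLQZ : L *m (a *: P + (-a) *: 1%:M) = (a *: P + (-a) *: 1%:M) *m L.
  rewrite mulmxDr mulmxDl -!scalemxAr -!scalemxAl hLP hPL mulmx1 mul1mx !scaler0.
  by rewrite !add0r.
rewrite expmD //.
have cQZ : (a *: P) *m ((-a) *: 1%:M) = ((-a) *: 1%:M) *m (a *: P).
  by rewrite -!scalemxAl -!scalemxAr mulmx1 mul1mx !scalerA mulrC.
rewrite expmD // expm_idem //.
have -> : - a = ln m by rewrite opprK.
rewrite expm_idem; last by rewrite mul1mx.
rewrite lnK ?posrE // /a expRN lnK ?posrE //.
have hTP : expm R N L *m P = P := expm_mulP _ _ _ _ hLP.
rewrite (_ : 1%:M + (m - 1) *: 1%:M = m *: 1%:M); last first.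
  by rewrite -{1}(scale1r 1%:M) -scalerDl addrC subrK.
rewrite -scalemxAr mulmx1 -scalemxAr mulmxDr mulmx1 -scalemxAr hTP scalerDr scalerA.
congr (_ + _ *: _).
by rewrite mulrBr mulfV ?gt_eqF // mulr1.
Qed.
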